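(* Denote by $a^+_{n,k}$, $a^-_{n,k}$ and $d^B_{n,k}$ the coefficient of $x^k$ in $f^+_n(x)$, $f^-_n(x)$ and $d^B_n(x)$, respectively. Then for all $n \ge 2$ and $k \ge 1$: $$ a^+_{n,k} = (2k-1)\, a^+_{n-1,k} + 2(n-k)\, a^+_{n-1,k-1} + 2(n-1)\, a^+_{n-2,k-1} + d^B_{n-1,k}, $$ $$ a^-_{n,k} = (2k-1)\, a^-_{n-1,k} + 2(n-k)\, a^-_{n-1,k-1} + 2(n-1)\, a^-_{n-2,k-1} + d^B_{n-1,k-1}. $$
   Context: A signed permutation of $[n]$ is a set $S = \{a_1, \dots, a_n\}$ with $a_i \in \{i, -i\}$, together with a bijection $w : S \to S$. - $a \in S$ is a $B$-excedance if $w(a) > a$, or if $a < 0$ and $w(a) = a$. - $w$ is a derangement if no $a \in S$ with $a > 0$ has $w(a) = a$. - $d^B_n(x) = \sum_{w \text{ derangement}} x^{\mathrm{exc}_B(w)}$, where $\mathrm{exc}_B(w)$ is the number of $B$-excedances, and $d^B_0 = 1$. - $f^+_n, f^-_n$ are the unique real polynomials with $d^B_n = f^+_n + f^-_n$, $f^+_n(x) = x^n f^+_n(1/x)$ and $f^-_n(x) = x^{n+1} f^-_n(1/x)$. *)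

(* Defs.v *)
From HB Require Import structures.
From mathcomp Require Import all_boot all_order all_algebra all_fingroup.
Set Implicit Arguments. Unset Strict Implicit. Unset Printing Implicit Defensive.
Import Order.TTheory GRing.Theory Num.Theory.
Local Open Scope ring_scope.

(* A signed permutation of [n] is encoded as a pair (s, p):
   s i = true  means a_{i+1} = -(i+1), s i = false means a_{i+1} = i+1
   (so S = {a_1,...,a_n}), and the bijection w : S -> S is w(a_{i+1}) = a_{p i + 1}. *)
Definition signed_perm (n : nat) : finType :=
  ({ffun 'I_n -> bool} * {perm 'I_n})%type.

Definition selt n (s : {ffun 'I_n -> bool}) (i : 'I_n) : int :=
  if s i then - (i.+1)%:Z else (i.+1)%:Z.

Definition is_excB n (w : signed_perm n) (i : 'I_n) : bool :=
  (selt w.1 i < selt w.1 (w.2 i)) ||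
  ((selt w.1 i < 0) && (selt w.1 (w.2 i) == selt w.1 i)).

Definition excB n (w : signed_perm n) : nat := #|[pred i | is_excB w i]|.

Definition is_derangement n (w : signed_perm n) : bool :=
  [forall i, (0 < selt w.1 i) ==> (selt w.1 (w.2 i) != selt w.1 i)].

Definition dB (R : nzRingType) (n : nat) : {poly R} :=
  \sum_(w : signed_perm n | is_derangement w) 'X^(excB w).

(* Main.v *)
Require Import Defs.
From HB Require Import structures.
From mathcomp Require Import all_boot all_order all_algebra all_fingroup.
From mathcomp Require Import zify ring lra.
Set Implicit Arguments. Unset Strict Implicit. Unset Printing Implicit Defensive.
Import Order.TTheory GRing.Theory Num.Theory.
Local Open Scope ring_scope.

Lemma selt_lt n (s : {ffun 'I_n -> bool}) x y :
  (selt s x < selt s y) = if s x then (if s y then (y < x)%N else true)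
                          else (if s y then false else (x < y)%N).
Proof.
rewrite /selt; case: (s x); case: (s y) => /=.
- by rewrite ltrN2 ltz_nat ltnS.
- by apply: (@lt_le_trans _ _ 0); rewrite // oppr_lt0 ltz_nat.
- apply/negbTE; rewrite -leNgt; apply: (@le_trans _ _ 0); by rewrite // oppr_le0.
- by rewrite ltz_nat ltnS.
Qed.

Lemma selt_eq n (s : {ffun 'I_n -> bool}) x y : (selt s x == selt s y) = (x == y).
Proof.
have [->|nxy] := eqVneq x y; first by rewrite eqxx.
apply/negbTE; move: nxy; rewrite /selt -val_eqE /=; case: (s x) (s y) => [] [] /eqP nxy;
  apply/eqP => /eqP; lia.
Qed.

Lemma selt_neg n (s : {ffun 'I_n -> bool}) x : (selt s x < 0) = s x.
Proof. by rewrite /selt; case: (s x); rewrite ?oppr_lt0 ltz_nat. Qed.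

Local Open Scope group_scope.

Section Lift.
Variable n : nat.
Implicit Types (i : 'I_n.+1).

Definition ext_s i (s : {ffun 'I_n -> bool}) (b : bool) : {ffun 'I_n.+1 -> bool} :=
  [ffun x => if unlift i x is Some k then s k else b].
Definition res_s i (s : {ffun 'I_n.+1 -> bool}) : {ffun 'I_n -> bool} :=
  [ffun k => s (lift i k)].
Definition fixp i (q : {perm 'I_n.+1}) : {perm 'I_n.+1} := (q * tperm i (q i))%g.

Lemma fixpE i q : fixp i q i = i.
Proof. by rewrite permM tpermR. Qed.

Definition res_fun i q (k : 'I_n) : 'I_n := odflt k (unlift i (fixp i q (lift i k))).

Lemma res_funE i q k : lift i (res_fun i q k) = fixp i q (lift i k).
Proof.
rewrite /res_fun; case: unliftP => [k' -> //|h].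
have := @perm_inj _ (fixp i q) _ _ (etrans h (esym (fixpE i q))); by move/eqP; rewrite lift_eqF.
Qed.

Lemma res_fun_inj i q : injective (res_fun i q).
Proof. by move=> a b h; apply: (lift_inj (h:=i)); apply: (@perm_inj _ (fixp i q)); rewrite -!res_funE h. Qed.

Definition res_p i q : {perm 'I_n} := perm (@res_fun_inj i q).

Lemma res_pE i q k : lift i (res_p i q k) = fixp i q (lift i k).
Proof. by rewrite permE res_funE. Qed.

Definition Phi i (x : signed_perm n * bool * 'I_n.+1) : signed_perm n.+1 :=
  let: (w, b, c) := x in (ext_s i w.1 b, (lift_perm i i w.2 * tperm i c)%g).
Definition Psi i (w : signed_perm n.+1) : signed_perm n * bool * 'I_n.+1 :=
  ((res_s i w.1, res_p i w.2), w.1 i, w.2 i).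

Lemma ext_s_lift i s b k : ext_s i s b (lift i k) = s k.
Proof. by rewrite ffunE liftK. Qed.
Lemma ext_s_id i s b : ext_s i s b i = b.
Proof. by rewrite ffunE unlift_none. Qed.

Lemma PsiK i : cancel (Psi i) (Phi i).
Proof.
case=> s p /=; congr pair.
  by apply/ffunP => x; rewrite ffunE; case: unliftP => [k ->|->]; rewrite ?ffunE.
have -> : lift_perm i i (res_p i p) = fixp i p.
  apply/permP => x; case: (unliftP i x) => [k ->|->].
    by rewrite lift_perm_lift res_pE.
  by rewrite lift_perm_id fixpE.
by rewrite /fixp -mulgA tperm2 mulg1.
Qed.

Lemma PhiK i : cancel (Phi i) (Psi i).
Proof.
case=> [[[s p] b] c] /=; rewrite /Psi /=.
have hc : (lift_perm i i p * tperm i c) i = c by rewrite permM lift_perm_id tpermL.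
rewrite ext_s_id hc; congr (_, _, _); congr pair.
  by apply/ffunP => k; rewrite ffunE ext_s_lift.
apply/permP => k; apply: (lift_inj (h:=i)).
by rewrite res_pE /fixp hc -mulgA tperm2 mulg1 lift_perm_lift.
Qed.

Lemma Phi_bij i : bijective (Phi i).
Proof. exact: (Bijective (PhiK i) (PsiK i)). Qed.

Lemma Phi_s i w b c k : (Phi i (w, b, c)).1 (lift i k) = w.1 k.
Proof. by rewrite /= ext_s_lift. Qed.
Lemma Phi_s_id i w b c : (Phi i (w, b, c)).1 i = b.
Proof. by rewrite /= ext_s_id. Qed.
Lemma Phi_p_id i w b c : (Phi i (w, b, c)).2 i = c.
Proof. by rewrite /= permM lift_perm_id tpermL. Qed.
Lemma Phi_p i w b c k : (Phi i (w, b, c)).2 (lift i k) =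
   if lift i (w.2 k) == c then i else lift i (w.2 k).
Proof.
rewrite /= permM lift_perm_lift; case: tpermP => [/eqP|->|/eqP h1 /eqP h2].
- by rewrite lift_eqF.
- by rewrite eqxx.
- by move: h2; rewrite eq_sym => /negbTE ->.
Qed.

End Lift.
Arguments Phi : simpl never.

Local Close Scope group_scope.

Definition cond n (w : signed_perm n) x :=
  (0 < selt w.1 x) ==> (selt w.1 (w.2 x) != selt w.1 x).

Lemma condE n (w : signed_perm n) x : cond w x = w.1 x || (w.2 x != x).
Proof.
by rewrite /cond selt_eq {1}/selt; case: (w.1 x).
Qed.

Lemma is_excBE n (w : signed_perm n) x :
  is_excB w x = (selt w.1 x < selt w.1 (w.2 x)) || (w.1 x && (w.2 x == x)).
Proof. by rewrite /is_excB selt_neg selt_eq. Qed.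

Lemma excB_sum n (w : signed_perm n) : excB w = (\sum_x (is_excB w x : nat))%N.
Proof. by rewrite /excB -sum1_card big_mkcond /=; apply: eq_bigr => x _; rewrite inE; case: is_excB. Qed.

Lemma excB_split n (w : signed_perm n.+1) i :
  excB w = (is_excB w i + \sum_k (is_excB w (lift i k) : nat))%N.
Proof. by rewrite excB_sum (bigD1_ord i) //. Qed.

Lemma forall_split n (P : pred 'I_n.+1) i :
  [forall x, P x] = P i && [forall k, P (lift i k)].
Proof.
apply/forallP/andP => [h|[h1 /forallP h2] x]; first by split => //; apply/forallP => k.
by case: (unliftP i x) => [k ->|->].
Qed.

Lemma der_split n (w : signed_perm n.+1) i :
  is_derangement w = cond w i && [forall k, cond w (lift i k)].
Proof. by rewrite /is_derangement (forall_split _ i). Qed.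

Lemma ltn_lift n (i : 'I_n.+1) a b : (lift i a < lift i b)%N = (a < b)%N.
Proof. by rewrite !ltnNge leq_bump2. Qed.

Lemma Phi_selt_lt n (i : 'I_n.+1) (w : signed_perm n) b c a d :
  (selt (Phi i (w, b, c)).1 (lift i a) < selt (Phi i (w, b, c)).1 (lift i d))
  = (selt w.1 a < selt w.1 d).
Proof. by rewrite !selt_lt !Phi_s !ltn_lift. Qed.

Lemma Phi_at_lift n (i : 'I_n.+1) (w : signed_perm n) b c k : lift i (w.2 k) != c ->
  (is_excB (Phi i (w, b, c)) (lift i k) = is_excB w k) /\
  (cond (Phi i (w, b, c)) (lift i k) = cond w k).
Proof.
move=> hk; have hp : (Phi i (w, b, c)).2 (lift i k) = lift i (w.2 k).
  by rewrite Phi_p (negbTE hk).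
rewrite is_excBE condE hp Phi_selt_lt !Phi_s (inj_eq lift_inj) -is_excBE; split => //.
by rewrite condE.
Qed.

Lemma val_lift_max n (k : 'I_n) : val (lift ord_max k) = val k.
Proof. exact: lift_max. Qed.

Lemma Phi_max_fix n (w : signed_perm n) b :
  excB (Phi ord_max (w, b, ord_max)) = (b + excB w)%N /\
  is_derangement (Phi ord_max (w, b, ord_max)) = b && is_derangement w.
Proof.
have hl k : lift ord_max (w.2 k) != ord_max by rewrite lift_eqF.
split.
  rewrite (excB_split _ ord_max) is_excBE Phi_p_id Phi_s_id ltxx eqxx /= andbT.
  by rewrite excB_sum; congr addn; apply: eq_bigr => k _; case: (Phi_at_lift b (hl k)) => ->.
rewrite (der_split _ ord_max) condE Phi_p_id Phi_s_id eqxx orbF; congr andb.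
by apply: eq_forallb => k; case: (Phi_at_lift b (hl k)) => _ ->.
Qed.

Lemma Phi_max_lift n (w : signed_perm n) b j :
  excB (Phi ord_max (w, b, lift ord_max (w.2 j))) =
     (1 + \sum_(k | k != j) (is_excB w k : nat))%N /\
  is_derangement (Phi ord_max (w, b, lift ord_max (w.2 j))) =
     [forall k, (k == j) || cond w k].
Proof.
have hk k : k != j -> lift ord_max (w.2 k) != lift ord_max (w.2 j).
  by move=> h; rewrite (inj_eq lift_inj) (inj_eq perm_inj).
have hj : (Phi ord_max (w, b, lift ord_max (w.2 j))).2 (lift ord_max j) = ord_max.
  by rewrite Phi_p eqxx.
have hcm : (lift ord_max (w.2 j) < @ord_max n)%N by rewrite (val_lift_max (w.2 j)) ltn_ord.
have hcm' : (lift ord_max j < @ord_max n)%N by rewrite (val_lift_max j) ltn_ord.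
have emax : is_excB (Phi ord_max (w, b, lift ord_max (w.2 j))) ord_max = b.
  rewrite is_excBE Phi_p_id Phi_s_id lift_eqF andbF orbF selt_lt Phi_s_id hcm.
  by case: (b); case: ifP => //; rewrite ltnNge ltnW.
have ej : is_excB (Phi ord_max (w, b, lift ord_max (w.2 j))) (lift ord_max j) = ~~ b.
  rewrite is_excBE hj eq_liftF andbF orbF selt_lt Phi_s_id Phi_s hcm'.
  by case: (b); case: ifP => //; rewrite ltnNge ltnW.
split.
  rewrite (excB_split _ ord_max) emax (bigD1 j) //= ej.
  rewrite (eq_bigr (fun k => (is_excB w k : nat))); last first.
    by move=> k /hk h; case: (Phi_at_lift b h) => ->.
  by rewrite addnA; case: (b).
rewrite (der_split _ ord_max) condE Phi_p_id lift_eqF orbT /=.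
apply: eq_forallb => k; have [->|hkj] := eqVneq k j.
  by rewrite condE hj eq_liftF orbT.
by case: (Phi_at_lift b (hk _ hkj)) => _ ->.
Qed.

Lemma Phi_fix_j n (w : signed_perm n) (j : 'I_n.+1) :
  excB (Phi j (w, false, j)) = excB w /\
  [forall x, (x == j) || cond (Phi j (w, false, j)) x] = is_derangement w.
Proof.
have hl k : lift j (w.2 k) != j by rewrite lift_eqF.
split.
  rewrite (excB_split _ j) is_excBE Phi_p_id Phi_s_id ltxx /=.
  by rewrite excB_sum; apply: eq_bigr => k _; case: (Phi_at_lift false (hl k)) => ->.
rewrite (forall_split _ j) eqxx /=; apply: eq_forallb => k.
by rewrite lift_eqF; case: (Phi_at_lift false (hl k)) => _ ->.
Qed.

Section Main.
Variable R : realFieldType.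

Lemma sum_Phi n (i : 'I_n.+1) (F : signed_perm n.+1 -> {poly R}) :
  \sum_(W : signed_perm n.+1) F W =
  \sum_(w : signed_perm n) \sum_(b : bool) \sum_(c : 'I_n.+1) F (Phi i (w, b, c)).
Proof.
rewrite (reindex (Phi i) (onW_bij _ (Phi_bij i))).
transitivity (\sum_(x : signed_perm n * bool) \sum_(c : 'I_n.+1) F (Phi i (x, c))).
  rewrite pair_big (eq_bigr (fun j => F (Phi i (j.1, j.2)))); last by move=> [].
  by apply: eq_bigl.
rewrite [RHS]pair_big (eq_bigr (fun x => \sum_(c < n.+1) F (Phi i ((x.1, x.2), c)))); last by move=> [].
by apply: eq_bigl.
Qed.

Definition G n (w : signed_perm n) : {poly R} :=
  \sum_(j : 'I_n) if [forall k, (k == j) || cond w k]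
                  then 'X^(1 + \sum_(k | k != j) (is_excB w k : nat))%N else 0.

Lemma step1 n : dB R n.+1 =
  \sum_(w : signed_perm n) ((if is_derangement w then 'X^((excB w).+1) else 0) + 2%:R * G w).
Proof.
rewrite /dB big_mkcond /= (sum_Phi ord_max); apply: eq_bigr => w _.
rewrite big_bool /= !(bigD1_ord ord_max) //=.
have [h1 h2] := Phi_max_fix w true; have [h3 h4] := Phi_max_fix w false.
rewrite h2 h4 h1 /= -addrA; congr (_ + _).
have E b : \sum_(i < n) (if is_derangement (Phi ord_max (w, b, lift ord_max i))
                    then 'X^(excB (Phi ord_max (w, b, lift ord_max i))) else 0) = G w.
  rewrite (reindex_inj (@perm_inj _ w.2)) /G; apply: eq_bigr => j _.
  by have [-> ->] := Phi_max_lift w b j.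
by rewrite !E add0r mulr2n mulrDl mul1r.
Qed.

Lemma sumX n (e : 'I_n -> bool) :
  \sum_(j < n) 'X^(1 + \sum_(k | k != j) (e k : nat))%N =
  (\sum_k (e k : nat))%:R *: 'X^(\sum_k (e k : nat)) +
  (n%:R - (\sum_k (e k : nat))%:R) *: 'X^((\sum_k (e k : nat)).+1) :> {poly R}.
Proof.
set E := (\sum_k (e k : nat))%N.
have h j : 'X^(1 + \sum_(k | k != j) (e k : nat))%N =
   (e j : nat)%:R *: 'X^E + (1 - (e j : nat)%:R) *: 'X^(E.+1) :> {poly R}.
  have -> : E = (e j + \sum_(k | k != j) (e k : nat))%N by rewrite /E (bigD1 j).
  case: (e j) => /=.
    by rewrite scale1r subrr scale0r addr0.
  by rewrite scale0r add0r subr0 scale1r add0n.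
rewrite (eq_bigr _ (fun j _ => h j)) big_split /= -!scaler_suml natr_sum sumrB.
by rewrite sumr_const card_ord.
Qed.

Definition H n (w : signed_perm n) (j : 'I_n) : bool :=
  [&& ~~ w.1 j, w.2 j == j & [forall k, (k == j) || cond w k]].

Lemma G_split n (w : signed_perm n) : G w =
  (if is_derangement w then \sum_(j < n) 'X^(1 + \sum_(k | k != j) (is_excB w k : nat))%N else 0)
  + \sum_(j < n) (if H w j then 'X^((excB w).+1) else 0).
Proof.
have -> : (if is_derangement w then \sum_(j < n) 'X^(1 + \sum_(k | k != j) (is_excB w k : nat))%N else 0)
   = \sum_(j < n) (if is_derangement w then 'X^(1 + \sum_(k | k != j) (is_excB w k : nat))%N else 0) :> {poly R}.
  by case: ifP => _ //; rewrite big1.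
rewrite /G -big_split /=; apply: eq_bigr => j _; rewrite /H.
case hc: (cond w j).
  have -> : [forall k, (k == j) || cond w k] = is_derangement w.
    apply: eq_forallb => k; rewrite /cond; have [->|//] := eqVneq k j.
    by move: hc; rewrite /cond => ->.
  move: hc; rewrite condE; case: (w.1 j) => /=; [|move=> /negbTE ->]; by rewrite ?andbF addr0.
have hd : is_derangement w = false.
  by apply/negbTE/negP => /forallP /(_ j); move: hc; rewrite /cond => ->.
rewrite hd add0r; move: hc; rewrite condE => /negbT; rewrite negb_or negbK => /andP[h1 h2].
rewrite h1 h2 /=; case: ifP => // _; congr 'X^_.
rewrite excB_sum [X in _ = X.+1](bigD1 j) //= is_excBE (eqP h2) ltxx (negbTE h1) /=.
by rewrite add1n.
Qed.

Lemma second n : \sum_(w : signed_perm n.+1) \sum_(j < n.+1) (if H w j then 'X^((excB w).+1) else 0)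
  = n.+1%:R *: ('X * dB R n).
Proof.
rewrite exchange_big /=.
transitivity (\sum_(j < n.+1) ('X * dB R n)); last first.
  by rewrite sumr_const card_ord scaler_nat.
apply: eq_bigr => j _; rewrite (sum_Phi j) /dB mulr_sumr [RHS]big_mkcond; apply: eq_bigr => w _.
  rewrite big_bool /= big1; last by move=> c _; rewrite /H Phi_s_id.
  rewrite add0r (bigD1 j) //= big1; last first.
    by move=> c hc; rewrite /H Phi_p_id (negbTE hc) andbF.
  have [h1 h2] := Phi_fix_j w j.
  rewrite addr0 /H Phi_s_id Phi_p_id eqxx h2 h1 /=.
  by case: ifP; rewrite ?mulr0 // exprS.
Qed.

Lemma rec n : dB R n.+2 =
  \sum_(w : signed_perm n.+1 | is_derangement w)
     ('X^((excB w).+1) + 2%:R * ((excB w)%:R *: 'X^(excB w)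
         + (n.+1%:R - (excB w)%:R) *: 'X^((excB w).+1)))
  + 2%:R * (n.+1%:R *: ('X * dB R n)).
Proof.
rewrite step1 -second mulr_sumr [in X in _ = X + _]big_mkcond -big_split /=.
apply: eq_bigr => w _.
rewrite G_split mulrDr addrA; congr (_ + _).
have -> := sumX (is_excB w); rewrite -excB_sum.
by case: ifP; rewrite ?mulr0 ?addr0.
Qed.

End Main.

Section Coef.
Variable R : realFieldType.

Lemma coef_dB n k : (dB R n)`_k = \sum_(w : signed_perm n | is_derangement w) (excB w == k)%:R.
Proof. by rewrite /dB coef_sum; apply: eq_bigr => w _; rewrite coefXn eq_sym. Qed.

Lemma rec_coef0 n : (dB R n.+2)`_0 = 0.
Proof.
rewrite rec coefD coef_sum big1 ?add0r; last first.
  move=> w _; rewrite mulr_natl coefD coefMn !coefD !coefZ !coefXn /=.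
  by case: (excB w) => [|e]; rewrite ?mulr0 ?mul0r ?addr0 ?mul0rn //= ?mulr0 ?addr0 ?mul0rn.
by rewrite mulr_natl coefMn coefZ coefXM /= mulr0 mul0rn.
Qed.

Lemma rec_coefS n l : (dB R n.+2)`_l.+1 =
  (2 * l.+1)%:R * (dB R n.+1)`_l.+1 + ((2 * n.+1 + 3)%:R - (2 * l.+1)%:R) * (dB R n.+1)`_l
  + (2 * n.+1)%:R * (dB R n)`_l.
Proof.
rewrite rec coefD coef_sum mulr_natl coefMn coefZ coefXM /=.
rewrite !coef_dB !mulr_sumr -big_split /=; congr (_ + _); last first.
  rewrite -sumrMnl; apply: eq_bigr => w _; rewrite natrM; ring.
apply: eq_bigr => w _.
rewrite mulr_natl coefD coefMn !coefD !coefZ !coefXn.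
have [->|h1] := eqVneq (excB w) l.+1.
  rewrite ?eqSS ?eqxx ?(gtn_eqF (ltnSn l)) ?(ltn_eqF (ltnSn l)) /=.
  rewrite !natrM !natrD; ring.
have [->|h2] := eqVneq (excB w) l.
  rewrite ?eqSS ?eqxx ?(gtn_eqF (ltnSn l)) ?(ltn_eqF (ltnSn l)) /=.
  rewrite !natrM !natrD; ring.
rewrite eqSS (eq_sym l) (negbTE h2) /=.
rewrite !natrM !natrD; ring.
Qed.
End Coef.

Section Pal.
Variable R : realFieldType.

Lemma poly_nz0 (r : {poly R}) : (forall x, x != 0 -> r.[x] = 0) -> r = 0.
Proof.
move=> h; apply/eqP; apply/negPn/negP => rnz.
suff : (size [seq (i.+1)%:R : R | i <- iota 0 (size r)] < size r)%N.
  by rewrite size_map size_iota ltnn.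
apply: max_poly_roots rnz _ _.
  apply/allP => x /mapP[i _ ->]; apply/eqP/h; by rewrite pnatr_eq0.
by rewrite map_inj_uniq ?iota_uniq // => a b /eqP; rewrite eqr_nat eqSS => /eqP.
Qed.

Lemma pal (p : {poly R}) m :
  (forall x, x != 0 -> p.[x] = x ^+ m * p.[x^-1]) ->
  forall j, p`_j = if (j <= m)%N then p`_(m - j) else 0.
Proof.
move=> h.
pose N := (size p + m)%N.
pose q := \poly_(i < N.+1) p`_(N - i).
have hq x : x != 0 -> x ^+ N * p.[x^-1] = q.[x].
  move=> xnz.
  rewrite (horner_coef_wide _ (n:=N.+1)); last by rewrite /N; lia.
  rewrite (horner_coef_wide _ (n:=N.+1) (p:=q)); last by rewrite size_poly.
  rewrite mulr_sumr (reindex_inj rev_ord_inj) /=; apply: eq_bigr => i _.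
  rewrite subSS coef_poly ltn_ord mulrCA exprVn; congr (_ * _).
  have hi : (i <= N)%N by rewrite -ltnS.
  have -> : x ^+ N = x ^+ (N - i) * x ^+ i by rewrite -exprD subnK.
  by rewrite mulrAC mulrV ?mul1r // unitfE expf_neq0.
have e : 'X^(N - m) * p = q.
  apply/eqP; rewrite -subr_eq0; apply/eqP/poly_nz0 => x xnz.
  rewrite !hornerE -hq // (h x xnz) mulrA -exprD subnK ?subrr //; rewrite /N; lia.
move=> j.
have hs : forall i, (size p <= i)%N -> p`_i = 0 by move=> i; apply: nth_default.
case: (leqP j N) => hjN; last first.
  rewrite hs; last by rewrite /N in hjN; lia.
  by case: ifP => // hjm; rewrite hs //; rewrite /N in hjN; lia.
have := congr1 (fun r : {poly R} => r`_(N - j)) e; rewrite /= coefXnM coef_poly.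
have hmN : (m <= N)%N by rewrite /N leq_addl.
have -> : (N - j < N.+1)%N by lia.
rewrite (subKn hjN).
case: (leqP j m) => hjm.
  rewrite ifF; last by lia.
  move=> <-; have -> : (N - j - (N - m) = m - j)%N by lia.
  by [].
rewrite ifT; last by lia.
by move=> <-.
Qed.
End Pal.

Section Alg.
Variable R : realFieldType.
Variables (n : int) (A B C Bm P Q : int -> R).
Hypothesis hA : forall t, A t = A (n - 1 - t).
Hypothesis hB : forall t, B t = B (n - 2 - t).
Hypothesis hC : forall t, C t = C (n - t).
Hypothesis hBm : forall t, Bm t = Bm (n - 1 - t).
Hypothesis hP : forall t, P t = P (n - t).
Hypothesis hQ : forall t, Q t = Q (n + 1 - t).
Hypothesis hF : forall t, P t + Q t =
  2 * t%:~R * (A t + C t) + (2 * n%:~R + 1 - 2 * t%:~R) * (A (t - 1) + C (t - 1))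
  + 2 * (n%:~R - 1) * (B (t - 1) + Bm (t - 1)).
Hypothesis hz : forall t, t < 0 -> [/\ P t = 0, A t = 0, B t = 0 & C t = 0].

Definition Rp t := (2 * t%:~R - 1) * A t + 2 * (n%:~R - t%:~R) * A (t - 1)
   + 2 * (n%:~R - 1) * B (t - 1) + (A t + C t).

Let U t := P t - Rp t.

Lemma arg (f : int -> R) a b : a = b -> f a = f b.
Proof. by move=> ->. Qed.

Lemma U_sym1 t : U t = U (n - t).
Proof.
rewrite /U /Rp.
rewrite [P (n - t)](hP) [A (n - t)]hA [A (n - t - 1)]hA [B (n - t - 1)]hB [C (n - t)]hC.
rewrite (arg P (_ : n - (n - t) = t)); last by ring.
rewrite (arg A (_ : n - 1 - (n - t) = t - 1)); last by ring.
rewrite (arg A (_ : n - 1 - (n - t - 1) = t)); last by ring.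
rewrite (arg B (_ : n - 2 - (n - t - 1) = t - 1)); last by ring.
rewrite (arg C (_ : n - (n - t) = t)); last by ring.
rewrite !intrB; ring.
Qed.

Lemma U_sym2 t : U t = U (n + 1 - t).
Proof.
have eP s : P s = 2 * s%:~R * (A s + C s) + (2 * n%:~R + 1 - 2 * s%:~R) * (A (s - 1) + C (s - 1))
  + 2 * (n%:~R - 1) * (B (s - 1) + Bm (s - 1)) - Q s.
  by rewrite -hF; ring.
rewrite /U /Rp !eP [Q (n + 1 - t)]hQ.
rewrite (arg Q (_ : n + 1 - (n + 1 - t) = t)); last by ring.
rewrite [A (n + 1 - t - 1)]hA [C (n + 1 - t)]hC [C (n + 1 - t - 1)]hC [Bm (n + 1 - t - 1)]hBm.
rewrite (arg A (_ : n - 1 - (n + 1 - t - 1) = t - 1)); last by ring.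
rewrite (arg C (_ : n - (n + 1 - t) = t - 1)); last by ring.
rewrite (arg C (_ : n - (n + 1 - t - 1) = t)); last by ring.
rewrite (arg Bm (_ : n - 1 - (n + 1 - t - 1) = t - 1)); last by ring.
rewrite !intrB !intrD; ring.
Qed.

Lemma U_neg t : t < 0 -> U t = 0.
Proof.
move=> ht; have [h1 h2 _ h4] := hz ht.
have ht1 : t - 1 < 0 by lia.
have [_ h5 h6 _] := hz ht1.
by rewrite /U /Rp h1 h2 h4 h5 h6; ring.
Qed.

Lemma U_step t : U t = U (t + 1).
Proof.
rewrite U_sym1 U_sym2; congr U; ring.
Qed.

Lemma main_alg t : P t = Rp t.
Proof.
have h k : U t = U (t + k%:Z).
  elim: k => [|k IH]; first by rewrite addr0.
  by rewrite IH U_step; congr U; lia.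
apply/eqP; rewrite -subr_eq0; apply/eqP.
have hk : n - t <= (`|n - t|%N)%:Z by rewrite abszE ler_norm.
have := h (`|n - t| + 1)%N; rewrite [U (t + _)]U_sym1 [U (n - _)]U_neg; last by move: hk; set k := `|n - t|%N; lia.
by [].
Qed.

End Alg.

Section Fin.
Variable R : realFieldType.

Definition cf (p : {poly R}) (t : int) : R := if (0 <= t) then p`_(`|t|%N) else 0.

Lemma natzR (k : nat) : (k%:Z)%:~R = k%:R :> R.
Proof. by []. Qed.

Lemma cf_nat p k : cf p k%:Z = p`_k.
Proof. by rewrite /cf. Qed.

Lemma cf_neg p t : t < 0 -> cf p t = 0.
Proof. by rewrite /cf ltNge => /negbTE ->. Qed.

Lemma cf_pred p l : cf p (Posz l.+1 - 1) = p`_l.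
Proof. by rewrite (_ : Posz l.+1 - 1 = Posz l) ?cf_nat //; lia. Qed.

Lemma cf_sym p m : (forall x, x != 0 -> p.[x] = x ^+ m * p.[x^-1]) ->
  forall t, cf p t = cf p (m%:Z - t).
Proof.
move=> h t; have hp := pal h.
case: (ltP t 0) => ht.
  rewrite cf_neg // /cf ifT; last by lia.
  rewrite hp ifF //; apply/negbTE; rewrite -ltnNge.
  have : (0 <= m%:Z - t) by lia.
  move: ht; case: t => // k _ _; rewrite NegzE opprK -PoszD absz_nat; lia.
case: (ltP (m%:Z) t) => hm.
  rewrite [RHS]cf_neg; last by lia.
  case: t ht hm => // j _ hm; rewrite cf_nat hp ifF //; apply/negbTE; rewrite -ltnNge; lia.
case: t ht hm => // j _ hm; rewrite cf_nat hp ifT; last by lia.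
rewrite /cf ifT; last by lia.
rewrite subzn; [by rewrite absz_nat | lia].
Qed.

End Fin.

Unset Implicit Arguments.

Theorem corollary7p9 (R : realFieldType) (fp fm : nat -> {poly R})
  (hdec : forall n, dB R n = fp n + fm n)
  (hfp : forall n (x : R), x != 0 -> (fp n).[x] = x ^+ n * (fp n).[x^-1])
  (hfm : forall n (x : R), x != 0 -> (fm n).[x] = x ^+ n.+1 * (fm n).[x^-1])
  (n k : nat) (hn : (2 <= n)%N) (hk : (1 <= k)%N) :
  (fp n)`_k = ((2 * k)%:R - 1) * (fp n.-1)`_k
              + 2%:R * (n%:R - k%:R) * (fp n.-1)`_k.-1
              + 2%:R * (n.-1)%:R * (fp n.-2)`_k.-1
              + (dB R n.-1)`_k
  /\
  (fm n)`_k = ((2 * k)%:R - 1) * (fm n.-1)`_k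
              + 2%:R * (n%:R - k%:R) * (fm n.-1)`_k.-1
              + 2%:R * (n.-1)%:R * (fm n.-2)`_k.-1
              + (dB R n.-1)`_k.-1.
Proof.
case: n hn => [|[|m]] // _; case: k hk => [|l] // _ /=.
have sA := cf_sym (hfp m.+1); have sB := cf_sym (hfp m).
have sC := cf_sym (hfm m.+1); have sBm := cf_sym (hfm m).
have sP := cf_sym (hfp m.+2); have sQ := cf_sym (hfm m.+2).
have hF : forall t, cf (fp m.+2) t + cf (fm m.+2) t =
  2 * t%:~R * (cf (fp m.+1) t + cf (fm m.+1) t)
  + (2 * (m.+2)%:Z%:~R + 1 - 2 * t%:~R) * (cf (fp m.+1) (t - 1) + cf (fm m.+1) (t - 1))
  + 2 * ((m.+2)%:Z%:~R - 1) * (cf (fp m) (t - 1) + cf (fm m) (t - 1)).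
  case=> [[|l']|k'].
  - rewrite !cf_nat -coefD -hdec rec_coef0 !cf_neg //; ring.
  - rewrite !cf_pred !cf_nat -!coefD -!hdec rec_coefS.
    rewrite !natzR; ring.
  - rewrite !cf_neg //; [ring | lia..].
have hA t : cf (fp m.+1) t = cf (fp m.+1) ((m.+2)%:Z - 1 - t).
  by rewrite sA; congr (cf _ _); lia.
have hB t : cf (fp m) t = cf (fp m) ((m.+2)%:Z - 2 - t).
  by rewrite sB; congr (cf _ _); lia.
have hC t : cf (fm m.+1) t = cf (fm m.+1) ((m.+2)%:Z - t).
  by rewrite sC.
have hBm t : cf (fm m) t = cf (fm m) ((m.+2)%:Z - 1 - t).
  by rewrite sBm; congr (cf _ _); lia.
have hP t : cf (fp m.+2) t = cf (fp m.+2) ((m.+2)%:Z - t).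
  by rewrite sP.
have hQ t : cf (fm m.+2) t = cf (fm m.+2) ((m.+2)%:Z + 1 - t).
  by rewrite sQ; congr (cf _ _); lia.
have hz t : t < 0 -> [/\ cf (fp m.+2) t = 0, cf (fp m.+1) t = 0, cf (fp m) t = 0
   & cf (fm m.+1) t = 0].
  by move=> ht; rewrite !cf_neg.
have := main_alg hA hB hC hBm hP hQ hF hz (Posz l.+1).
have := hF (Posz l.+1).
rewrite /Rp !cf_pred !cf_nat !natzR !hdec !coefD => h1 h2.
split; first by rewrite h2 !natrM; ring.
apply: (@addrI _ (fp m.+2)`_l.+1); rewrite h1 h2 !natrM; ring.
Qed.
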